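(* Let $\bar\alpha\in[0,1]$ and $n\ge1$. The minimum of $C(\boldsymbol{\alpha})$ over all $\boldsymbol{\alpha}\in[0,1]^n$ satisfying $G(\boldsymbol{\alpha})=0$ is attained at $\boldsymbol{\alpha}_*=(\bar\alpha,\bar\alpha,\dots,\bar\alpha)$, and the minimum value is $C(\boldsymbol{\alpha}_* )=n\,c(\bar\alpha)$; that is, $C(\boldsymbol{\alpha})\ge n\,c(\bar\alpha)$ for every $\boldsymbol{\alpha}\in[0,1]^n$ with $G(\boldsymbol{\alpha})=0$.
   Context: Model of a road with $n\ge1$ parallel lanes of common length $d>0$. Vehicles have length $L>0$. A vehicle keeps a headway (space gap) $\bar h$ to the vehicle in front of it if both it and the vehicle in front are autonomous, and headway $h$ otherwise, where $0\le \bar h<h$. Vehicle types within a lane are i.i.d. Bernoulli: each vehicle in lane $i$ is autonomous with probability $\alpha_i\in[0,1]$ (the lane's autonomy level). Set $k_1=(L+h)/d$ and $k_2=(h-\bar h)/d$, so $k_1>k_2>0$ and $k_1-k_2=(L+\bar h)/d>0$. The capacity of a lane with autonomy level $\alpha\in[0,1]$ is $$c(\alpha)=\frac{1}{k_1-k_2\alpha^2}=\frac{d}{L+h-(h-\bar h)\alpha^2}.$$ Let $\bar\alpha\in[0,1]$ be the overall fraction of autonomous vehicles on the road. For $\boldsymbol{\alpha}=(\alpha_1,\dots,\alpha_n)\in[0,1]^n$ define $C(\boldsymbol{\alpha})=\sum_{i=1}^n c(\alpha_i)$ (total capacity) and $G(\boldsymbol{\alpha})=\sum_{i=1}^n(\alpha_i-\bar\alpha)c(\alpha_i)$;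 the constraint $G(\boldsymbol{\alpha})=0$ expresses that the overall autonomy level equals $\bar\alpha$. *)

(* Defs.v *)
From Stdlib Require Import Reals Lra.
Open Scope R_scope.

Fixpoint rsum (n : nat) (f : nat -> R) : R :=
  match n with
  | O => 0
  | S m => rsum m f + f m
  end.

(* Capacity of a lane with autonomy level a:
   c(a) = d / (L + h - (h - hbar) a^2) = 1/(k1 - k2 a^2). *)
Definition cap (d L h hbar a : R) : R := d / (L + h - (h - hbar) * a ^ 2).

Definition Ctot (d L h hbar : R) (n : nat) (alpha : nat -> R) : R :=
  rsum n (fun i => cap d L h hbar (alpha i)).

Definition Gcon (d L h hbar abar : R) (n : nat) (alpha : nat -> R) : R :=
  rsum n (fun i => (alpha i - abar) * cap d L h hbar (alpha i)).

(* Main.v *)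
Require Import Defs.
From Stdlib Require Import Reals Lra Lia FunctionalExtensionality.
Open Scope R_scope.

Lemma rsum_const n c : rsum n (fun _ => c) = INR n * c.
Proof. induction n; simpl rsum. simpl; ring. rewrite IHn, S_INR; ring. Qed.

Lemma rsum_lin n f g m : rsum n (fun i => f i - m * g i) = rsum n f - m * rsum n g.
Proof. induction n; simpl. ring. rewrite IHn; ring. Qed.

Lemma rsum_ge n f c : (forall i, (i < n)%nat -> f i >= c) -> rsum n f >= INR n * c.
Proof.
  induction n; intros H; simpl rsum. simpl; lra.
  rewrite S_INR. assert (rsum n f >= INR n * c) by (apply IHn; intros; apply H; lia).
  assert (f n >= c) by (apply H; lia). lra.
Qed.

Theorem proposition1 (d L h hbar abar : R) (n : nat)
  (hd : 0 < d) (hL : 0 < L) (hhbar : 0 <= hbar) (hh : hbar < h)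
  (habar : 0 <= abar <= 1) (hn : (1 <= n)%nat) :
  (* alpha_* = (abar,...,abar) is feasible and attains n c(abar) *)
  Gcon d L h hbar abar n (fun _ => abar) = 0 /\
  Ctot d L h hbar n (fun _ => abar) = INR n * cap d L h hbar abar /\
  (* it is a minimiser over the feasible set *)
  (forall alpha : nat -> R,
     (forall i, (i < n)%nat -> 0 <= alpha i <= 1) ->
     Gcon d L h hbar abar n alpha = 0 ->
     Ctot d L h hbar n alpha >= INR n * cap d L h hbar abar).
Proof.
  split; [|split].
  - unfold Gcon.
    replace (fun _ : nat => (abar - abar) * cap d L h hbar abar) with (fun _ : nat => 0).
    + rewrite rsum_const; ring.
    + apply functional_extensionality; intros; ring.
  - unfold Ctot; apply rsum_const.
  - intros alpha Ha HG.
    set (k := h - hbar).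
    set (A := L + h - k * abar ^ 2).
    assert (HA : 0 < A) by (unfold A, k; assert (abar^2 <= 1) by nra; nra).
    set (mu := 2 * k * abar / A).
    assert (E : Ctot d L h hbar n alpha = Ctot d L h hbar n alpha - mu * Gcon d L h hbar abar n alpha)
      by (rewrite HG; ring).
    rewrite E. unfold Ctot, Gcon. rewrite <- rsum_lin.
    apply rsum_ge. intros i Hi. specialize (Ha i Hi).
    set (a := alpha i).
    assert (HD : 0 < L + h - (h - hbar) * a ^ 2) by (assert (a^2 <= 1) by (unfold a; nra); nra).
    unfold cap.
    assert (Eq : d / (L + h - (h - hbar) * a ^ 2) - mu * ((a - abar) * (d / (L + h - (h - hbar) * a ^ 2)))
                 - d / (L + h - (h - hbar) * abar ^ 2)
                 = d * k * (a - abar) ^ 2 / (A * (L + h - (h - hbar) * a ^ 2))).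
    { unfold mu, A, k in *. field. lra. }
    assert (0 <= d * k * (a - abar) ^ 2 / (A * (L + h - (h - hbar) * a ^ 2))).
    { apply Rmult_le_pos. assert (0 < k) by (unfold k; lra).
      apply Rmult_le_pos; [nra| apply pow2_ge_0].
      left; apply Rinv_0_lt_compat; nra. }
    lra.
Qed.
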